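(* Let $\sigma_0$ be uniform on $Q$ and $m(k)=\mathbf E[\sigma_0^k]$ for $k\in\{0,1,\dots\}$. Let $v_1,\dots,v_k\in\mathsf V$ be distinct and $r_1,\dots,r_k\in\{0,1,\dots\}$. Then $$\mathbf E\big[\sigma(v_1)^{r_1}\cdots\sigma(v_k)^{r_k}\big]=\sum_{\mathcal P}\mathbf P(\pi(\omega)=\mathcal P)\prod_{A\in\mathcal P}m\Big(\sum_{v_j\in A}r_j\Big),$$ where the sum runs over all partitions $\mathcal P$ of $\{v_1,\dots,v_k\}$ such that $\sum_{v_j\in A}r_j$ is even for every $A\in\mathcal P$. In particular $\mathbf E[\sigma(v_1)\sigma(v_2)]=m(2)\,\mathbf P(v_1\leftrightarrow v_2)$, where $\{v_1\leftrightarrow v_2\}$ is the event that $v_1$ and $v_2$ lie in the same cluster of $\omega$.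
   Context: Let $M$ be a compact orientable surface without boundary, or the plane. Let $\mathsf G=(\mathsf V,\mathsf E)$ be a finite connected graph embedded in $M$ with all faces topological discs, and $\mathsf G^*=(\mathsf U,\mathsf E^* )$ its embedded dual ($\mathsf U$ = faces of $\mathsf G$); $e^*$ is the dual edge crossing $e$, $\xi^*=\{e^*:e\in\xi\}$. Fix integers $q,q'\ge1$, finite $Q\subset\mathbb R$, $Q'\subset\mathbb C$ with $Q=-Q$, $Q'=-Q'$, $|Q|=q$, $|Q'|=q'$, and $a,b\in(0,1]$. For $\sigma:\mathsf V\to Q$, $\eta(\sigma)\subseteq\mathsf E^*$ is the set of $e^*$ whose primal $e$ has endpoints with different $\sigma$-values; for $\sigma':\mathsf U\to Q'$, $\eta(\sigma')\subseteq\mathsf E$ is the set of $e$ whose dual $e^*$ has endpoints with different $\sigma'$-values. $\mathbf P(\sigma,\sigma')\propto a^{|\eta(\sigma')|}b^{|\eta(\sigma)|}$ on $\Sigma=\{(\sigma,\sigma'):\eta(\sigma)^*\cap\eta(\sigma')=\emptyset\}$. Percolation: given $(\sigma,\sigma')$, every edge of $\eta(\sigma')$ and every dual edge of $\eta(\sigma)$ is open; for each pair $(e,e^* )$ with $e\notin\eta(\sigma')$, $e^*\notin\eta(\sigma)$, independently: if $a+b\le1$, ($e$ open, $e^*$ closed) w.p. $a$, ($e$ closed, $e^*$ open) w.p. $b$, both open w.p. $1-a-b$; if $a+b\ge1$, ($e$ open, $e^*$ closed) w.p. $1-b$, ($e$ closed, $e^*$ open) w.p. $1-a$, both closed w.p.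 $a+b-1$. $\omega$ is the set of open primal edges; $\mathbf P,\mathbf E$ refer to the joint law. Clusters of $\omega$ are the connected components of $(\mathsf V,\omega)$, and $\pi(\omega)$ is the partition of $\{v_1,\dots,v_k\}$ induced by the clusters of $\omega$. *)

(* Defs.v *)
From HB Require Import structures.
From mathcomp Require Import all_boot all_order all_algebra.
From mathcomp Require Import perm finmap.
From mathcomp Require Import complex.
From mathcomp Require Import reals.

Set Implicit Arguments.
Unset Strict Implicit.
Unset Printing Implicit Defensive.

Import Order.TTheory GRing.Theory Num.Theory.
Local Open Scope ring_scope.

(* A connected graph cellularly embedded in a compact orientable surface,
   encoded (Heffter-Edmonds) as a combinatorial map / rotation system:
   darts D, fixed-point-free involution alpha (the two half-edges of an
   edge), rotation rho around vertices; faces are the orbits of rho o alpha. *)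
Record cmap := CMap {
  dart : finType;
  alpha : {perm dart};
  rho : {perm dart};
  vtx : finType;
  fce : finType;
  edg : finType;
  vert : dart -> vtx;
  face : dart -> fce;
  edge : dart -> edg;
  alpha_invol : forall d, alpha (alpha d) = d;
  alpha_nofix : forall d, alpha d != d;
  vert_surj : forall x, exists d, vert d = x;
  face_surj : forall f, exists d, face d = f;
  edge_surj : forall e, exists d, edge d = e;
  vertE : forall d d', (vert d = vert d') <-> fconnect rho d d';
  faceE : forall d d', (face d = face d') <-> fconnect (fun x => rho (alpha x)) d d';
  edgeE : forall d d', (edge d = edge d') <-> (d' = d \/ d' = alpha d);
  cmap_connected : forall d d',
      connect (fun x y => (y == rho x) || (y == alpha x)) d d'
}.

Arguments alpha {c}.
Arguments rho {c}.
Arguments vert {c}.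
Arguments face {c}.
Arguments edge {c}.

Section Model.
Variable R : realType.
Variable G : cmap.
Variable Q : {fset R}.
Variable Q' : {fset R[i]}.
Variables a b : R.

Local Notation V := (vtx G).
Local Notation U := (fce G).
Local Notation E := (edg G).

(* primal edge e has endpoints with different sigma-values: e^* in eta(sigma) *)
Definition eta_s (s : {ffun V -> Q}) : {set E} :=
  [set e | [exists d, (edge d == e) && (val (s (vert d)) != val (s (vert (alpha d))))]].

(* dual edge e^* has endpoints (faces on the two sides of e) with different
   sigma'-values: e in eta(sigma') *)
Definition eta_s' (s' : {ffun U -> Q'}) : {set E} :=
  [set e | [exists d, (edge d == e) && (val (s' (face d)) != val (s' (face (alpha d))))]].

Definition compatible (s : {ffun V -> Q}) (s' : {ffun U -> Q'}) : bool :=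
  [disjoint eta_s s & eta_s' s'].

(* conditional probability that the pair (e, dual e) is in state
   (x = e open, y = e^* open), given (sigma, sigma') *)
Definition edge_kernel (s : {ffun V -> Q}) (s' : {ffun U -> Q'}) (e : E)
    (x y : bool) : R :=
  if e \in eta_s' s' then (if x && ~~ y then 1 else 0)
  else if e \in eta_s s then (if ~~ x && y then 1 else 0)
  else if a + b <= 1 then
    match x, y with
    | true, false => a | false, true => b
    | true, true => 1 - a - b | false, false => 0 end
  else
    match x, y with
    | true, false => 1 - b | false, true => 1 - a
    | false, false => a + b - 1 | true, true => 0 end.

Definition spin_weight (s : {ffun V -> Q}) (s' : {ffun U -> Q'}) : R :=
  if compatible s s' then a ^+ #|eta_s' s'| * b ^+ #|eta_s s| else 0.

(* unnormalised joint weight of (sigma, sigma', omega, omega dual), where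
   omega = open primal edges, omegad = edges whose dual is open *)
Definition joint_weight (s : {ffun V -> Q}) (s' : {ffun U -> Q'})
    (w wd : {set E}) : R :=
  spin_weight s s' * \prod_(e : E) edge_kernel s s' e (e \in w) (e \in wd).

Definition partition_fn : R :=
  \sum_(s : {ffun V -> Q}) \sum_(s' : {ffun U -> Q'}) spin_weight s s'.

Definition Exp (F : {ffun V -> Q} -> {set E} -> R) : R :=
  (\sum_(s : {ffun V -> Q}) \sum_(s' : {ffun U -> Q'})
     \sum_(w : {set E}) \sum_(wd : {set E})
        joint_weight s s' w wd * F s w) / partition_fn.

Definition Prob (A : {ffun V -> Q} -> {set E} -> bool) : R :=
  Exp (fun s w => if A s w then 1 else 0).

Definition open_adj (w : {set E}) : rel V :=
  fun x y => [exists d, [&& edge d \in w, vert d == x & vert (alpha d) == y]].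

Definition same_cluster (w : {set E}) (x y : V) : bool :=
  connect (open_adj w) x y.

Definition cluster_partition (w : {set E}) (A : {set V}) : {set {set V}} :=
  [set [set x in A | same_cluster w y x] | y in A].

Definition moment (k : nat) : R :=
  (\sum_(x : Q) (val x) ^+ k) / (#|{: Q}|%:R).

End Model.

Arguments Exp {R} G Q Q' a b F.
Arguments Prob {R} G Q Q' a b A.

(* Main.v *)
Require Import Defs.
From HB Require Import structures.
From mathcomp Require Import all_boot all_order all_algebra.
From mathcomp Require Import perm finmap.
From mathcomp Require Import complex.
From mathcomp Require Import reals.
From mathcomp Require Import ring lra.
Import Order.TTheory GRing.Theory Num.Theory.
Local Open Scope ring_scope.
Set Implicit Arguments.
Unset Strict Implicit.
Unset Printing Implicit Defensive.

Section S.
Variable R : realType.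
Variable G : cmap.
Variable Q : {fset R}.
Variable Q' : {fset R[i]}.
Variables a b : R.
Local Notation V := (vtx G).
Local Notation E := (edg G).

Lemma edge_alpha (d : dart G) : edge (alpha d) = edge d.
Proof. by symmetry; apply/(edgeE d (alpha d)); right. Qed.

Lemma open_adj_sym (w : {set E}) : symmetric (open_adj w).
Proof.
suff H : forall x y, open_adj w x y -> open_adj w y x.
  by move=> x y; apply/idP/idP => /H.
move=> x y /existsP[d /and3P[H1 H2 H3]]; apply/existsP; exists (alpha d).
by rewrite edge_alpha H1 H3 alpha_invol H2.
Qed.

Lemma csym (w : {set E}) : connect_sym (open_adj w).
Proof. exact: sym_connect_sym (open_adj_sym w). Qed.

Definition rt (w : {set E}) (x : V) := fingraph.root (open_adj w) x.

Lemma rt_rt (w : {set E}) x : rt w (rt w x) = rt w x.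
Proof. exact: (root_root (csym w)). Qed.

Lemma rtP (w : {set E}) x y : reflect (rt w x = rt w y) (same_cluster w x y).
Proof. exact: (fingraph.rootP (csym w)). Qed.

Lemma connect_eqf (T : finType) (T' : Type) (e : rel T) (f : T -> T') :
  (forall x y, e x y -> f x = f y) -> forall x y, connect e x y -> f x = f y.
Proof.
move=> He x y /connectP[p Hp ->].
elim: p x Hp => [|z p IH] x //= /andP[Hxz Hp].
by rewrite (He _ _ Hxz) IH.
Qed.

Lemma disj_iff (w : {set E}) (s : {ffun V -> Q}) :
  [disjoint w & eta_s s] = [forall x, s x == s (rt w x)].
Proof.
apply/idP/idP.
- move=> Hd; apply/forallP => x; apply/eqP.
  apply: (connect_eqf (e := open_adj w)); last exact: connect_root.
  move=> x' y' /existsP[d /and3P[H1 /eqP H2 /eqP H3]].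
  have : edge d \notin eta_s s.
    by rewrite (disjointFr Hd H1).
  rewrite inE negb_exists => /forallP /(_ d); rewrite eqxx /= negbK.
  by rewrite H2 H3 => /eqP /val_inj.
- move=> /forallP Hs; apply/pred0P => e /=; apply/negbTE/negP => /andP[He].
  rewrite inE => /existsP[d /andP[/eqP Hd]]; apply/negP; rewrite negbK.
  have Hc : same_cluster w (vert d) (vert (alpha d)).
    apply: connect1; apply/existsP; exists d; by rewrite Hd He !eqxx.
  move/rtP: Hc => Hc.
  by rewrite (eqP (Hs (vert d))) (eqP (Hs (vert (alpha d)))) Hc.
Qed.

Lemma sum_set_prod (T : finType) (g : T -> bool -> R) :
  \sum_(W : {set T}) \prod_(e : T) g e (e \in W) = \prod_(e : T) (g e true + g e false).
Proof.
have -> : \prod_(e : T) (g e true + g e false) = \prod_(e : T) \sum_(c : bool) g e c.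
  by apply: eq_bigr => e _; rewrite big_bool.
rewrite bigA_distr_bigA.
rewrite (@reindex _ _ _ _ _ (fun W : {set T} => [ffun e => e \in W])) /=; last first.
  apply: onW_bij; exists (fun f : {ffun T -> bool} => [set e | f e]) => [W|f].
    by apply/setP => e; rewrite inE ffunE.
  by apply/ffunP => e; rewrite ffunE inE.
by apply: eq_bigr => W _; apply: eq_bigr => e _; rewrite ffunE.
Qed.

Lemma disj_prod (T : finType) (A B : {set T}) :
  (if [disjoint A & B] then 1 else 0 : R) =
  \prod_(e : T) (if (e \in A) && (e \in B) then 0 else 1).
Proof.
case: ifP => Hd.
  by rewrite big1 // => e _; case: ifP => // /andP[HA HB]; rewrite (disjointFr Hd HA) in HB.
move/negbT: Hd => /pred0Pn[e /= /andP[HA HB]].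
by rewrite (bigD1 e) //= HA HB mul0r.
Qed.

Definition Kw (s' : {ffun fce G -> Q'}) (w : {set E}) : R :=
  \prod_(e : E) (if e \in w then (if e \in eta_s' s' then a else 1 - b)
                 else (if e \in eta_s' s' then 0 else b)).

Lemma sum_wd (s : {ffun V -> Q}) (s' : {ffun fce G -> Q'}) (w : {set E}) :
  \sum_(wd : {set E}) joint_weight a b s s' w wd =
  (if [disjoint w & eta_s s] then 1 else 0) * Kw s' w.
Proof.
have Hsp : spin_weight a b s s' = \prod_(e : E)
   ((if (e \in eta_s s) && (e \in eta_s' s') then 0 else 1) *
    (if e \in eta_s' s' then a else 1) * (if e \in eta_s s then b else 1)).
  rewrite /spin_weight /compatible !big_split /= -disj_prod.
  rewrite -!big_mkcond /= !prodr_const.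
  by case: ifP => _; rewrite ?mul1r ?mul0r.
under eq_bigr => wd _ do rewrite /joint_weight Hsp -big_split /=.
rewrite (sum_set_prod (fun e c => ((if (e \in eta_s s) && (e \in eta_s' s') then 0 else 1) *
    (if e \in eta_s' s' then a else 1) * (if e \in eta_s s then b else 1)) *
    edge_kernel a b s s' e (e \in w) c)).
rewrite /Kw disj_prod -big_split; apply: eq_bigr => e _ /=.
rewrite /edge_kernel.
case: (e \in eta_s' s'); case: (e \in eta_s s); case: (e \in w); case: (a + b <= 1) => /=;
  rewrite ?mul0r ?mul1r ?mulr1 ?mulr0 ?addr0 ?add0r //.
all: try ring.
Qed.

Definition ind (s : {ffun V -> Q}) (w : {set E}) : R :=
  if [disjoint w & eta_s s] then 1 else 0.

Definition Rv (w : {set E}) k (v : 'I_k -> V) (r : 'I_k -> nat) (x : V) : nat :=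
  (\sum_(i < k | rt w (v i) == x) r i)%N.

Lemma Rv_nonroot w k v r x : rt w x != x -> @Rv w k v r x = 0%N.
Proof.
move=> Hx; rewrite /Rv big1 // => i /eqP Hi.
by move: Hx; rewrite -Hi rt_rt eqxx.
Qed.

Lemma count_lemma (q0 : Q) (w : {set E}) k (v : 'I_k -> V) (r : 'I_k -> nat) :
  \sum_(s : {ffun V -> Q}) ind s w * \prod_(i < k) (val (s (v i))) ^+ r i =
  \prod_(x : V) (if rt w x == x then \sum_(q : Q) (val q) ^+ Rv w v r x else 1).
Proof.
pose C := fun s : {ffun V -> Q} => [forall x, s x == s (rt w x)].
pose psi := fun g : {ffun V -> Q} => ([ffun x => g (rt w x)] : {ffun V -> Q}).
pose phi := fun s : {ffun V -> Q} => ([ffun x => if rt w x == x then s x else q0] : {ffun V -> Q}).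
pose D := fun g : {ffun V -> Q} => [forall x, (rt w x != x) ==> (g x == q0)].
pose H := fun x (q : Q) => (val q) ^+ Rv w v r x.
transitivity (\sum_(s | C s) \prod_(i < k) (val (s (v i))) ^+ r i).
  rewrite [RHS]big_mkcond; apply: eq_bigr => s _.
  by rewrite /ind disj_iff /C; case: ifP => _; rewrite ?mul1r ?mul0r.
rewrite (reindex_onto psi phi); last first.
  move=> s /forallP Hs; apply/ffunP => x; rewrite !ffunE rt_rt eqxx.
  by rewrite (eqP (Hs x)).
transitivity (\sum_(g | D g) \prod_(x : V) H x (g x)).
  apply: eq_big => g.
    have -> : C (psi g) by apply/forallP => x; rewrite !ffunE rt_rt.
    rewrite /=; apply/eqP/forallP => [Hg x|Hg].
      apply/implyP => Hx; rewrite -(congr1 (fun f : {ffun V -> Q} => f x) Hg) ffunE.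
      by rewrite (negbTE Hx).
    apply/ffunP => x; rewrite !ffunE; case: ifP => [/eqP ->//|/negbT Hx].
    by rewrite (eqP (implyP (Hg x) Hx)).
  move=> _.
  rewrite (partition_big (fun i => rt w (v i)) predT) //=.
  apply: eq_bigr => x _; rewrite /H /Rv -prodrXr.
  by apply: eq_bigr => i /eqP <-; rewrite ffunE.
rewrite big_mkcond /=.
transitivity (\sum_(g : {ffun V -> Q}) \prod_(x : V)
   (if (rt w x == x) || (g x == q0) then H x (g x) else 0)).
  apply: eq_bigr => g _; case: ifP => HD.
    apply: eq_bigr => x _; case: ifP => // /norP[/negP Hx /negP Hg].
    by case: Hg; apply: (implyP (forallP HD x)); apply/negP.
  move/negbT: HD; rewrite negb_forall => /existsP[x]; rewrite negb_imply => /andP[Hx Hg].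
  by rewrite (bigD1 x) //= (negbTE Hx) (negbTE Hg) /= mul0r.
rewrite -(bigA_distr_bigA (fun x (q : Q) => if (rt w x == x) || (q == q0) then H x q else 0)) /=; apply: eq_bigr => x _.
case: ifP => Hx /=.
  by [].
rewrite -big_mkcond big_pred1_eq /H Rv_nonroot ?Hx //.
Qed.

Lemma Exp_num (F : {ffun V -> Q} -> {set E} -> R) :
  \sum_(s : {ffun V -> Q}) \sum_(s' : {ffun fce G -> Q'})
     \sum_(w : {set E}) \sum_(wd : {set E}) joint_weight a b s s' w wd * F s w =
  \sum_(s : {ffun V -> Q}) \sum_(s' : {ffun fce G -> Q'})
     \sum_(w : {set E}) ind s w * Kw s' w * F s w.
Proof.
apply: eq_bigr => s _; apply: eq_bigr => s' _; apply: eq_bigr => w _.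
by rewrite -mulr_suml sum_wd.
Qed.

Lemma core (Fs : {ffun V -> Q} -> R) (M : {set E} -> R) :
  (forall w, \sum_(s : {ffun V -> Q}) ind s w * Fs s = (\sum_(s : {ffun V -> Q}) ind s w) * M w) ->
  Exp G Q Q' a b (fun s _ => Fs s) = Exp G Q Q' a b (fun _ w => M w).
Proof.
move=> HM; rewrite /Exp; congr (_ / _); rewrite !Exp_num.
rewrite exchange_big [RHS]exchange_big; apply: eq_bigr => s' _.
rewrite exchange_big [RHS]exchange_big; apply: eq_bigr => w _.
transitivity (Kw s' w * \sum_(s : {ffun V -> Q}) ind s w * Fs s).
  by rewrite mulr_sumr; apply: eq_bigr => s _; ring.
rewrite HM mulrA mulr_sumr mulr_suml; apply: eq_bigr => s _; ring.
Qed.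

Hypothesis Qpos : (0 < #|{: Q}|)%N.
Hypothesis Qsym : forall x : R, x \in Q -> - x \in Q.

Lemma moment_sum n : \sum_(q : Q) (val q) ^+ n = #|{: Q}|%:R * moment Q n.
Proof.
rewrite /moment mulrC divfK //; rewrite pnatr_eq0; by rewrite -lt0n.
Qed.

Lemma moment0 : moment Q 0 = 1.
Proof.
rewrite /moment; under eq_bigr do rewrite expr0.
rewrite sumr_const mulfV // pnatr_eq0 -lt0n; done.
Qed.

Lemma moment_odd n : odd n -> moment Q n = 0.
Proof.
move=> Hn; rewrite /moment.
suff -> : \sum_(q : Q) (val q) ^+ n = 0 by rewrite mul0r.
have Hneg (q : Q) : - val q \in Q by apply: Qsym; exact: valP.
pose ng := fun q : Q => (FSetSub (Hneg q) : Q).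
have ngK : involutive ng by move=> q; apply: val_inj => /=; rewrite opprK.
have HS : \sum_(q : Q) (val q) ^+ n = - \sum_(q : Q) (val q) ^+ n.
  rewrite {1}(reindex_inj (can_inj ngK)) /= -sumrN; apply: eq_bigr => q _.
  by rewrite /= exprNn -signr_odd Hn expr1 mulN1r.
by move/eqP: HS; rewrite -addr_eq0 -mulr2n mulrn_eq0 /= => /eqP.
Qed.

Lemma ind_moment (q0 : Q) (w : {set E}) k (v : 'I_k -> V) (r : 'I_k -> nat) :
  \sum_(s : {ffun V -> Q}) ind s w * \prod_(i < k) (val (s (v i))) ^+ r i =
  (\sum_(s : {ffun V -> Q}) ind s w) * \prod_(x : V) moment Q (Rv w v r x).
Proof.
have H0 := count_lemma q0 w v (fun _ => 0%N).
have -> : \sum_(s : {ffun V -> Q}) ind s w = \sum_(s : {ffun V -> Q}) ind s w * \prod_(i < k) (val (s (v i))) ^+ 0.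
  by apply: eq_bigr => s _; rewrite big1 ?mulr1 // => i _; rewrite expr0.
rewrite H0 (count_lemma q0) -big_split /=; apply: eq_bigr => x _.
case: ifP => Hx.
  rewrite moment_sum.
  have -> : Rv w v (fun=> 0%N) x = 0%N by rewrite /Rv big1.
  by rewrite moment_sum moment0 mulr1.
by rewrite Rv_nonroot ?Hx // moment0 mulr1.
Qed.

Lemma Exp_ext (F1 F2 : {ffun V -> Q} -> {set E} -> R) :
  (forall s w, F1 s w = F2 s w) -> Exp G Q Q' a b F1 = Exp G Q Q' a b F2.
Proof.
move=> HF; rewrite /Exp; congr (_ / _).
do 4! (apply: eq_bigr => ? _).
by rewrite HF.
Qed.

Lemma Exp_sum (I : finType) (P : pred I) (F : I -> {ffun V -> Q} -> {set E} -> R) (c : I -> R) :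
  Exp G Q Q' a b (fun s w => \sum_(j | P j) F j s w * c j) =
  \sum_(j | P j) Exp G Q Q' a b (F j) * c j.
Proof.
rewrite /Exp.
under [RHS]eq_bigr => j _ do rewrite mulrAC.
rewrite -mulr_suml; congr (_ / _).
symmetry.
under eq_bigr => j _ do rewrite mulr_suml.
rewrite exchange_big; apply: eq_bigr => s _.
under eq_bigr => j _ do rewrite mulr_suml.
rewrite exchange_big; apply: eq_bigr => s' _.
under eq_bigr => j _ do rewrite mulr_suml.
rewrite exchange_big; apply: eq_bigr => w _.
under eq_bigr => j _ do rewrite mulr_suml.
rewrite exchange_big; apply: eq_bigr => wd _.
by rewrite mulr_sumr; apply: eq_bigr => j _; rewrite mulrA.
Qed.

Lemma Exp_scale (F : {ffun V -> Q} -> {set E} -> R) (c : R) :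
  Exp G Q Q' a b (fun s w => F s w * c) = Exp G Q Q' a b F * c.
Proof.
rewrite /Exp mulrAC; congr (_ / _).
rewrite mulr_suml; apply: eq_bigr => s _.
rewrite mulr_suml; apply: eq_bigr => s' _.
rewrite mulr_suml; apply: eq_bigr => w _.
rewrite mulr_suml; apply: eq_bigr => wd _.
by rewrite mulrA.
Qed.

Lemma eqrel_sc (w : {set E}) (A : {set V}) : {in A & &, equivalence_rel (same_cluster w)}.
Proof.
move=> x y z _ _ _; split; first exact: connect0.
by move=> Hxy; rewrite /same_cluster (same_connect (csym w) Hxy).
Qed.

Lemma cp_partition (w : {set E}) (A : {set V}) : partition (cluster_partition w A) A.
Proof. exact: (equivalence_partitionP (@eqrel_sc w A)). Qed.

Lemma cp_moment (w : {set E}) k (v : 'I_k -> V) (r : 'I_k -> nat) :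
  \prod_(x : V) moment Q (Rv w v r x) =
  \prod_(B in cluster_partition w [set v i | i : 'I_k]) moment Q (\sum_(i < k | v i \in B) r i).
Proof.
set A := [set v i | i : 'I_k].
pose blk := fun y : V => [set x in A | same_cluster w y x].
pose S := [set rt w y | y in A].
have Hblk y : blk (rt w y) = blk y.
  apply/setP => x; rewrite !inE; congr (_ && _).
  apply/rtP/rtP; rewrite rt_rt //.
have -> : cluster_partition w A = blk @: S.
  rewrite /S -imset_comp; apply: eq_imset => y /=; by rewrite Hblk.
rewrite big_imset /=; last first.
  move=> x1 x2 /imsetP[y1 Hy1 ->] /imsetP[y2 Hy2 ->] Heq.
  have : y1 \in blk (rt w y1) by rewrite Hblk inE Hy1 /=; exact: connect0.
  rewrite Heq inE Hy1 /= => /rtP; rewrite rt_rt => ->.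
  by [].
rewrite [RHS]big_mkcond; apply: eq_bigr => x _.
case: ifP => HS.
  congr (moment Q _); rewrite /Rv; apply: eq_bigl => i.
  case/imsetP: HS => y Hy ->.
  have HvA : v i \in A by apply/imsetP; exists i.
  rewrite inE HvA /=.
  rewrite /same_cluster; apply/eqP/idP.
    by move=> H; apply/rtP; rewrite rt_rt H.
  by move/rtP; rewrite rt_rt => ->.
rewrite (_ : Rv w v r x = 0%N) ?moment0 //.
rewrite /Rv; apply: big1 => i /eqP Hi.
have HvA : v i \in A by apply/imsetP; exists i.
by move: HS; rewrite -Hi (imset_f (rt w) HvA).
Qed.

Lemma psum_pt (w : {set E}) k (v : 'I_k -> V) (r : 'I_k -> nat) :
  \sum_(P : {set {set V}} |
               partition P [set v i | i : 'I_k] &&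
               [forall B in P, ~~ odd (\sum_(i < k | v i \in B) r i)])
     (if cluster_partition w [set v i | i : 'I_k] == P then 1 else 0)
       * \prod_(B in P) moment Q (\sum_(i < k | v i \in B) r i)
  = \prod_(B in cluster_partition w [set v i | i : 'I_k]) moment Q (\sum_(i < k | v i \in B) r i).
Proof.
set A := [set v i | i : 'I_k].
set pi := cluster_partition w A.
case Hc: (partition pi A && [forall B in pi, ~~ odd (\sum_(i < k | v i \in B) r i)]).
  rewrite (bigD1 pi) //= eqxx mul1r [X in _ + X]big1 ?addr0 // => P /andP[_ HP].
  by rewrite eq_sym (negbTE HP) mul0r.
rewrite [LHS]big1; last first.
  move=> P HP; case: eqP => [HPe|_]; last by rewrite mul0r.
  by move: HP; rewrite -HPe Hc.
move/negbT: Hc; rewrite cp_partition /= negb_forall => /existsP[B].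
rewrite negb_imply negbK => /andP[HB Hodd].
by rewrite (bigD1 B) //= moment_odd // mul0r.
Qed.

Lemma two_pt (w : {set E}) (v1 v2 : V) :
  \prod_(x : V) moment Q (Rv w (fun i : 'I_2 => if val i == 0%N then v1 else v2) (fun _ => 1%N) x)
  = (if same_cluster w v1 v2 then 1 else 0) * moment Q 2.
Proof.
have HR x : Rv w (fun i : 'I_2 => if val i == 0%N then v1 else v2) (fun _ => 1%N) x
   = ((rt w v1 == x) + (rt w v2 == x))%N.
  by rewrite /Rv big_mkcond /= !big_ord_recl big_ord0 /=; do 2 case: ifP.
case: (rtP w v1 v2) => Hs.
  rewrite mul1r (bigD1 (rt w v1)) //= big1 ?mulr1.
    by rewrite HR -Hs eqxx.
  by move=> x Hx; rewrite HR -Hs eq_sym (negbTE Hx) moment0.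
rewrite mul0r (bigD1 (rt w v1)) //= HR eqxx.
have -> : (rt w v2 == rt w v1) = false by apply/eqP => H; apply: Hs.
by rewrite moment_odd // mul0r.
Qed.
End S.

Unset Implicit Arguments.

Theorem proposition5p1 (R : realType) (G : cmap) (Q : {fset R}) (Q' : {fset R[i]})
    (a b : R) :
  (0 < #|{: Q}|)%N -> (0 < #|{: Q'}|)%N ->
  (forall x : R, x \in Q -> - x \in Q) ->
  (forall z : R[i], z \in Q' -> - z \in Q') ->
  0 < a <= 1 -> 0 < b <= 1 ->
  (forall (k : nat) (v : 'I_k -> vtx G) (r : 'I_k -> nat),
     injective v ->
     Exp G Q Q' a b (fun s _ => \prod_(i < k) (val (s (v i))) ^+ r i)
     = \sum_(P : {set {set vtx G}} |
               partition P [set v i | i : 'I_k] &&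
               [forall B in P, ~~ odd (\sum_(i < k | v i \in B) r i)])
         Prob G Q Q' a b (fun _ w => cluster_partition w [set v i | i : 'I_k] == P)
         * \prod_(B in P) moment Q (\sum_(i < k | v i \in B) r i))
  /\
  (forall v1 v2 : vtx G, v1 != v2 ->
     Exp G Q Q' a b (fun s _ => val (s v1) * val (s v2))
     = moment Q 2 * Prob G Q Q' a b (fun _ w => same_cluster w v1 v2)).
Proof.
move=> HQ _ Hsym _ _ _.
have [q0 _] : exists q0 : Q, q0 \in predT by apply/card_gt0P.
split.
  move=> k v r _.
  transitivity (Exp G Q Q' a b (fun _ w => \prod_(x : vtx G) moment Q (Rv w v r x))).
    apply: core => w; exact: ind_moment.
  rewrite /Prob -Exp_sum; apply: Exp_ext => s w.
  by rewrite psum_pt // cp_moment.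
move=> v1 v2 _.
pose v := fun i : 'I_2 => if val i == 0%N then v1 else v2.
transitivity (Exp G Q Q' a b (fun s _ => \prod_(i < 2) (val (s (v i))) ^+ (fun _ => 1%N) i)).
  apply: Exp_ext => s w.
  by rewrite !big_ord_recl big_ord0 /= !expr1 mulr1.
transitivity (Exp G Q Q' a b (fun _ w => \prod_(x : vtx G) moment Q (Rv w v (fun _ => 1%N) x))).
  apply: core => w; exact: ind_moment.
rewrite /Prob mulrC -Exp_scale; apply: Exp_ext => s w.
exact: two_pt.
Qed.
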